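(* There is a positive constant $C$ such that for every real number $\lambda$ and every real $x\ge0$, $$\sum_{k=0}^\infty\frac{|H_k(\lambda)|}{k!}x^k\le C(1+x)^{1/2}\exp\Big(x^2+\frac{\lambda^2}{2}\Big),$$ where $H_k$ denotes the $k$-th Hermite polynomial.
   Context: The Hermite polynomials are $H_k(\lambda)=(-1)^ke^{\lambda^2}\frac{d^k}{d\lambda^k}\big(e^{-\lambda^2}\big)$, $k=0,1,2,\dots$; equivalently $\sum_{k\ge0}\frac{H_k(\lambda)}{k!}x^k=\exp(2\lambda x-x^2)$. *)

(* Defs.v *)
From Stdlib Require Import Reals Factorial.
From Coquelicot Require Import Coquelicot.
Open Scope R_scope.

Definition hermite (k : nat) (l : R) : R :=
  (-1) ^ k * exp (l ^ 2) * Derive_n (fun t => exp (- t ^ 2)) k l.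

(* Main.v *)
Require Import Defs.
From Stdlib Require Import Reals Factorial Lra Lia Psatz FunctionalExtensionality.
From Coquelicot Require Import Coquelicot.
Open Scope R_scope.

Lemma D_mult (f g : R -> R) (x df dg : R) : is_derive f x df -> is_derive g x dg ->
  is_derive (fun t => f t * g t) x (df * g x + f x * dg).
Proof. intros H1 H2. apply (is_derive_mult f g x df dg H1 H2). intros; apply Rmult_comm. Qed.
Lemma D_plus (f g : R -> R) (x df dg : R) : is_derive f x df -> is_derive g x dg ->
  is_derive (fun t => f t + g t) x (df + dg).
Proof. intros H1 H2. apply (is_derive_plus f g x df dg H1 H2). Qed.
Lemma D_minus (f g : R -> R) (x df dg : R) : is_derive f x df -> is_derive g x dg ->
  is_derive (fun t => f t - g t) x (df - dg).
Proof. intros H1 H2. apply (is_derive_minus f g x df dg H1 H2). Qed.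
Lemma D_const (a x : R) : is_derive (fun _ => a) x 0.
Proof. apply (is_derive_const a x). Qed.
Lemma D_id (x : R) : is_derive (fun t => t) x 1.
Proof. apply (is_derive_id x). Qed.
Lemma D_expc (f : R -> R) (x df : R) : is_derive f x df -> is_derive (fun t => exp (f t)) x (df * exp (f x)).
Proof. intros H. apply (is_derive_comp exp f x (exp (f x)) df); auto. apply is_derive_exp. Qed.
Lemma D_ext (f g : R -> R) (x l l' : R) : (forall t, f t = g t) -> l = l' -> is_derive f x l -> is_derive g x l'.
Proof. intros H E H1. rewrite <- E. exact (is_derive_ext f g x l H H1). Qed.
Lemma D_cont (f : R -> R) (x l : R) : is_derive f x l -> continuity_pt f x.
Proof. intros H. apply continuity_pt_filterlim. apply (ex_derive_continuous (K:=R_AbsRing) (V:=R_NormedModule)). exists l; exact H. Qed.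

Lemma mono0 (f df : R -> R) (b : R) : (forall x, is_derive f x (df x)) ->
  (forall x, Rmin 0 b <= x <= Rmax 0 b -> df x * b <= 0) -> f b <= f 0.
Proof.
  intros Hd Hs.
  destruct (MVT_gen f 0 b df) as [c [Hc Heq]].
  - intros; apply Hd.
  - intros; eapply D_cont; apply Hd.
  - specialize (Hs c Hc). lra.
Qed.

Lemma series_bound (a : nat -> R) M : (forall n, 0 <= a n) ->
  (forall N, sum_f_R0 a N <= M) -> ex_series a /\ Series a <= M.
Proof.
  intros Ha HM.
  assert (Hf : ex_finite_lim_seq (sum_n a)).
  { apply ex_finite_lim_seq_incr with M.
    - intros n. rewrite !sum_n_Reals. simpl. specialize (Ha (S n)). lra.
    - intros n. rewrite sum_n_Reals. apply HM. }
  destruct Hf as [l Hl].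
  assert (Hs : is_series a l) by exact Hl.
  split. exists l; exact Hs.
  rewrite (is_series_unique a l Hs).
  apply (is_lim_seq_le (sum_n a) (fun _ => M) l M).
  - intros n. rewrite sum_n_Reals. apply HM.
  - exact Hl.
  - apply is_lim_seq_const.
Qed.
Lemma D_ext' (f g : R -> R) (x l l' : R) : is_derive f x l -> (forall t, f t = g t) -> l = l' -> is_derive g x l'.
Proof. intros H1 H E. eapply D_ext; eauto. Qed.

Fixpoint P (n : nat) (t : R) : R :=
  match n with
  | O => 1
  | S O => 2 * t
  | S ((S p) as m) => 2 * t * P m t - 2 * INR m * P p t
  end.

Definition dP (n : nat) (t : R) : R :=
  match n with O => 0 | S m => 2 * INR n * P m t end.

Lemma P_SS n t : P (S (S n)) t = 2 * t * P (S n) t - 2 * INR (S n) * P n t.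
Proof. reflexivity. Qed.

Lemma P_deriv2 n : (forall t, is_derive (P n) t (dP n t)) /\
                   (forall t, is_derive (P (S n)) t (dP (S n) t)).
Proof.
  induction n as [|n [IH1 IH2]].
  - split; intros t.
    + apply D_const.
    + simpl. eapply D_ext' with (f := fun t => 2 * t).
      * apply (D_mult (fun _ => 2) (fun t => t)); [apply D_const | apply D_id].
      * intros; reflexivity.
      * simpl; ring.
  - split; [exact IH2|]. intros t.
    eapply D_ext' with (f := fun t => 2 * t * P (S n) t - 2 * INR (S n) * P n t).
    + apply D_minus.
      * apply D_mult. apply (D_mult (fun _ => 2) (fun t => t)); [apply D_const | apply D_id].
        apply IH2.
      * apply (D_mult (fun _ => 2 * INR (S n))). apply D_const. apply IH1.
    + intros; reflexivity.
    + destruct n as [|m].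
    * simpl. ring.
    * change (dP (S (S m)) t) with (2 * INR (S (S m)) * P (S m) t).
      change (dP (S m) t) with (2 * INR (S m) * P m t).
      change (dP (S (S (S m))) t) with (2 * INR (S (S (S m))) * P (S (S m)) t).
      rewrite (P_SS m t). rewrite !S_INR. ring.
Qed.

Lemma P_deriv n t : is_derive (P n) t (dP n t).
Proof. apply (proj1 (P_deriv2 n)). Qed.

Lemma P_next n t : P (S n) t = 2 * t * P n t - dP n t.
Proof. destruct n as [|m]. simpl; ring. rewrite P_SS. reflexivity. Qed.

Lemma rodrigues n t : Derive_n (fun t => exp (- t ^ 2)) n t = (-1) ^ n * P n t * exp (- t ^ 2).
Proof.
  revert t. induction n as [|n IH]; intros t.
  - simpl. ring.
  - change (Derive (Derive_n (fun t => exp (- t ^ 2)) n) t = (-1) ^ S n * P (S n) t * exp (- t ^ 2)). rewrite (Derive_ext _ (fun t => (-1) ^ n * P n t * exp (- t ^ 2)) t IH).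
    apply is_derive_unique.
    eapply D_ext' with (f := fun t => (-1) ^ n * P n t * exp (- t ^ 2)).
    + apply (D_mult (fun t => (-1) ^ n * P n t) (fun t => exp (- t ^ 2))).
      apply (D_mult (fun _ => (-1)^n) (P n)). apply D_const. apply P_deriv.
      apply (D_expc (fun t => - t ^ 2)).
      eapply (D_ext' (fun t => -1 * (t * t))).
      apply (D_mult (fun _ => -1) (fun t => t * t)). apply D_const. apply D_mult; apply D_id.
      intros; ring. reflexivity.
    + intros; reflexivity.
    + rewrite P_next. simpl. ring.
Qed.

Definition c (u : R) (k : nat) : R := (u / 2) ^ k / INR (fact k).
Definition A (u : R) (N : nat) (l : R) : R := sum_f_R0 (fun k => P k l ^ 2 * c u k) N.
Definition dA (u : R) (N : nat) (l : R) : R := sum_f_R0 (fun k => 2 * P k l * dP k l * c u k) N.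

Lemma INR_S_neq0 k : INR (S k) <> 0.
Proof. apply not_0_INR. lia. Qed.

Lemma c_S u k : c u (S k) = c u k * (u / 2) / INR (S k).
Proof.
  unfold c. rewrite fact_simpl, mult_INR. simpl pow.
  field. split; [apply INR_fact_neq_0 | apply INR_S_neq0].
Qed.

Lemma c_nonneg u k : 0 <= u -> 0 <= c u k.
Proof.
  intros Hu. unfold c. apply Rmult_le_pos. apply pow_le; lra.
  left; apply Rinv_0_lt_compat, INR_fact_lt_0.
Qed.

Lemma Psq_deriv (k : nat) (cc l : R) : is_derive (fun l => P k l ^ 2 * cc) l (2 * P k l * dP k l * cc).
Proof.
  eapply D_ext' with (f := fun l => (P k l * P k l) * cc).
  - apply (D_mult (fun l => P k l * P k l) (fun _ => cc)).
    apply D_mult; apply P_deriv. apply D_const.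
  - intros; ring.
  - ring.
Qed.

Lemma A_deriv (u : R) (N : nat) (l : R) : is_derive (A u N) l (dA u N l).
Proof.
  revert l; induction N as [|N IH]; intros l.
  - unfold A, dA. apply (Psq_deriv 0 (c u 0) l).
  - unfold A, dA.
    apply (D_plus (fun l => sum_f_R0 (fun k => P k l ^ 2 * c u k) N)
                  (fun l => P (S N) l ^ 2 * c u (S N))).
    apply IH. apply Psq_deriv.
Qed.

Lemma dA_id u N l : 1 + u <> 0 ->
  dA u N l - 2 * (2 * u / (1 + u)) * l * A u N l
  = - (2 * u / (1 + u)) * c u N * P N l * P (S N) l.
Proof.
  intros Hu. induction N as [|N IH].
  - unfold dA, A; simpl. unfold c; simpl. field. exact Hu.
  - assert (E : dA u N l = 2 * (2 * u / (1 + u)) * l * A u N l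
                 - (2 * u / (1 + u)) * c u N * P N l * P (S N) l) by lra.
    unfold dA, A in *. rewrite !tech5.
    rewrite E. rewrite P_SS.
    change (dP (S N) l) with (2 * INR (S N) * P N l).
    rewrite c_S. field. split; [apply INR_S_neq0 | exact Hu].
Qed.

Definition aa (u : R) : R := 2 * u / (1 + u).

Definition F (u : R) (N : nat) (l : R) : R :=
  exp (- (aa u * l ^ 2)) * (A u N l - aa u * c u N / 2 * P N l ^ 2).

Lemma F_deriv (u : R) (N : nat) (l : R) : 1 + u <> 0 ->
  is_derive (F u N) l (- (aa u * (2 - aa u) * c u N * l * P N l ^ 2 * exp (- (aa u * l ^ 2)))).
Proof.
  intros Hu.
  eapply D_ext' with (f := fun l => exp (- (aa u * l ^ 2)) * (A u N l - aa u * c u N / 2 * P N l ^ 2)).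
  - apply (D_mult (fun l => exp (- (aa u * l ^ 2))) (fun l => A u N l - aa u * c u N / 2 * P N l ^ 2)).
    + apply (D_expc (fun l => - (aa u * l ^ 2))).
      eapply D_ext' with (f := fun l => (- aa u) * (l * l)).
      * apply (D_mult (fun _ => - aa u) (fun l => l * l)). apply D_const. apply D_mult; apply D_id.
      * intros; ring.
      * reflexivity.
    + apply (D_minus (A u N) (fun l => aa u * c u N / 2 * P N l ^ 2)).
      * apply A_deriv.
      * eapply D_ext' with (f := fun l => P N l ^ 2 * (aa u * c u N / 2)).
        apply Psq_deriv. intros; ring. reflexivity.
  - intros; reflexivity.
  - pose proof (dA_id u N l Hu) as E. fold (aa u) in E.
    assert (E2 : dA u N l = 2 * aa u * l * A u N l - aa u * c u N * P N l * P (S N) l) by lra.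
    rewrite E2, P_next. field.
Qed.

Lemma aa_bounds u : 0 <= u < 1 -> 0 <= aa u <= 1.
Proof.
  intros Hu. unfold aa. split.
  - apply Rmult_le_pos; [lra | left; apply Rinv_0_lt_compat; lra].
  - apply Rmult_le_reg_r with (1 + u). lra. unfold Rdiv. rewrite Rmult_assoc, Rinv_l; lra.
Qed.

Lemma A_nonneg u N l : 0 <= u -> 0 <= A u N l.
Proof.
  intros Hu. unfold A. induction N as [|N IH].
  - simpl sum_f_R0. apply Rmult_le_pos. apply pow2_ge_0. apply c_nonneg; auto.
  - rewrite tech5. apply Rplus_le_le_0_compat; auto.
    apply Rmult_le_pos. apply pow2_ge_0. apply c_nonneg; auto.
Qed.

Lemma between_prod x l : Rmin 0 l <= x <= Rmax 0 l -> 0 <= x * l.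
Proof.
  intros H. destruct (Rle_dec 0 l).
  - rewrite Rmin_left, Rmax_right in H by lra. nra.
  - rewrite Rmin_right, Rmax_left in H by lra. nra.
Qed.

Lemma A_bound u N l : 0 <= u < 1 -> A u N l <= exp (aa u * l ^ 2) * A u (S N) 0.
Proof.
  intros Hu. destruct (aa_bounds u Hu) as [Ha0 Ha1].
  assert (Hm : F u (S N) l <= F u (S N) 0).
  { apply (mono0 (F u (S N)) (fun l => - (aa u * (2 - aa u) * c u (S N) * l * P (S N) l ^ 2 * exp (- (aa u * l ^ 2))))).
    - intros x. apply F_deriv. lra.
    - intros x Hx. pose proof (between_prod x l Hx) as Hxl.
      assert (0 <= aa u * (2 - aa u) * c u (S N) * P (S N) x ^ 2 * exp (- (aa u * x ^ 2))).
      { assert (0 <= aa u * (2 - aa u)) by nra.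
        assert (0 <= c u (S N)) by (apply c_nonneg; lra).
        assert (0 <= P (S N) x ^ 2) by apply pow2_ge_0.
        assert (0 < exp (- (aa u * x ^ 2))) by apply exp_pos.
        apply Rmult_le_pos; [apply Rmult_le_pos; [apply Rmult_le_pos|]|]; lra. }
      nra. }
  unfold F in Hm. replace (0 ^ 2) with 0 in Hm by ring.
  rewrite Rmult_0_r, Ropp_0, exp_0, Rmult_1_l in Hm.
  assert (HA : A u (S N) l = A u N l + P (S N) l ^ 2 * c u (S N)) by (unfold A; apply tech5).
  assert (Hc : 0 <= c u (S N) * P (S N) l ^ 2) by (apply Rmult_le_pos; [apply c_nonneg; lra | apply pow2_ge_0]).
  assert (Hc0 : 0 <= c u (S N) * P (S N) 0 ^ 2) by (apply Rmult_le_pos; [apply c_nonneg; lra | apply pow2_ge_0]).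
  assert (He : exp (aa u * l ^ 2) * exp (- (aa u * l ^ 2)) = 1) by (rewrite <- exp_plus; rewrite Rplus_opp_r; apply exp_0).
  assert (Hpos : 0 < exp (aa u * l ^ 2)) by apply exp_pos.
  assert (H1 : A u N l <= A u (S N) l - aa u * c u (S N) / 2 * P (S N) l ^ 2) by nra.
  assert (H2 : A u (S N) l - aa u * c u (S N) / 2 * P (S N) l ^ 2 =
               exp (aa u * l ^ 2) * (exp (- (aa u * l ^ 2)) * (A u (S N) l - aa u * c u (S N) / 2 * P (S N) l ^ 2))).
  { rewrite <- Rmult_assoc, He; ring. }
  rewrite H2 in H1.
  assert (H3 : exp (aa u * l ^ 2) * (exp (- (aa u * l ^ 2)) * (A u (S N) l - aa u * c u (S N) / 2 * P (S N) l ^ 2))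
               <= exp (aa u * l ^ 2) * (A u (S N) 0 - aa u * c u (S N) / 2 * P (S N) 0 ^ 2)).
  { apply Rmult_le_compat_l; lra. }
  assert (H4 : 0 <= exp (aa u * l ^ 2) * (aa u * c u (S N) / 2 * P (S N) 0 ^ 2)).
  { apply Rmult_le_pos; [lra|]. unfold Rdiv. 
    replace (aa u * c u (S N) * / 2 * P (S N) 0 ^ 2) with ((aa u * / 2) * (c u (S N) * P (S N) 0 ^ 2)) by ring.
    apply Rmult_le_pos; lra. }
  assert (H5 : exp (aa u * l ^ 2) * (A u (S N) 0 - aa u * c u (S N) / 2 * P (S N) 0 ^ 2) =
     exp (aa u * l ^ 2) * A u (S N) 0 - exp (aa u * l ^ 2) * (aa u * c u (S N) / 2 * P (S N) 0 ^ 2)) by ring.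
  lra.
Qed.

Definition dc (k : nat) (w : R) : R := match k with O => 0 | S j => c w j / 2 end.
Definition dZ (N : nat) (w : R) : R := sum_f_R0 (fun k => P k 0 ^ 2 * dc k w) N.

Lemma c_deriv (k : nat) (w : R) : is_derive (fun w => c w k) w (dc k w).
Proof.
  destruct k as [|j].
  - eapply D_ext'. apply (D_const 1). intros; unfold c; simpl; field. reflexivity.
  - eapply D_ext' with (f := fun w => (w / 2) ^ (S j) * / INR (fact (S j))).
    + apply (D_mult (fun w => (w / 2) ^ (S j)) (fun _ => / INR (fact (S j)))).
      * apply (is_derive_pow (fun w => w / 2) (S j) w (1 * / 2 + w * 0)).
        apply (D_mult (fun w => w) (fun _ => / 2)). apply D_id. apply D_const.
      * apply D_const.
    + intros; reflexivity.
    + unfold dc, c. rewrite fact_simpl, mult_INR. simpl pred.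
      field. split; [apply INR_fact_neq_0 | apply INR_S_neq0].
Qed.

Lemma Z_deriv (N : nat) (w : R) : is_derive (fun w => A w N 0) w (dZ N w).
Proof.
  induction N as [|N IH].
  - unfold A, dZ. simpl sum_f_R0.
    eapply D_ext'. apply (D_mult (fun _ => P 0 0 ^ 2) (fun w => c w 0)). apply D_const. apply c_deriv.
    intros; reflexivity. simpl; ring.
  - unfold A, dZ. 
    eapply D_ext'. apply (D_plus (fun w => sum_f_R0 (fun k => P k 0 ^ 2 * c w k) N) (fun w => P (S N) 0 ^ 2 * c w (S N))).
    apply IH.
    eapply D_ext'. apply (D_mult (fun _ => P (S N) 0 ^ 2) (fun w => c w (S N))). apply D_const. apply c_deriv.
    intros; reflexivity. reflexivity.
    intros; reflexivity. unfold dZ. rewrite tech5. ring.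
Qed.

Lemma Z_id N w :
  (1 - w ^ 2) * dZ N w - w * A w N 0 =
  - (INR N * w * (P (pred N) 0 ^ 2 * c w (pred N)) + INR (S N) * w * (P N 0 ^ 2 * c w N)).
Proof.
  induction N as [|N IH].
  - unfold dZ, A, dc, c. simpl. field.
  - unfold dZ, A in *. rewrite !tech5.
    destruct N as [|m].
    + simpl in *. unfold dc, c in *. simpl in *. field.
    + assert (E : (1 - w ^ 2) * sum_f_R0 (fun k => P k 0 ^ 2 * dc k w) (S m) =
          w * sum_f_R0 (fun k => P k 0 ^ 2 * c w k) (S m)
          - (INR (S m) * w * (P (pred (S m)) 0 ^ 2 * c w (pred (S m))) + INR (S (S m)) * w * (P (S m) 0 ^ 2 * c w (S m)))) by lra.
      replace ((1 - w ^ 2) * (sum_f_R0 (fun k => P k 0 ^ 2 * dc k w) (S m) + P (S (S m)) 0 ^ 2 * dc (S (S m)) w))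
        with ((1 - w ^ 2) * sum_f_R0 (fun k => P k 0 ^ 2 * dc k w) (S m) + (1 - w ^ 2) * (P (S (S m)) 0 ^ 2 * dc (S (S m)) w)) by ring.
      rewrite E. simpl pred. unfold dc. rewrite P_SS. rewrite (c_S w (S m)), (c_S w m).
      rewrite (S_INR (S (S m))), (S_INR (S m)).
      assert (0 < INR (S m)) by (apply lt_0_INR; lia).
      field. lra.
Qed.

Lemma A0_one N l : A 0 N l = 1.
Proof.
  induction N as [|N IH].
  - unfold A, c; simpl. field.
  - unfold A in *. rewrite tech5, IH. unfold c. replace ((0 / 2) ^ S N) with 0 by (simpl; field). unfold Rdiv; ring.
Qed.

Lemma Z_bound u N : 0 <= u -> A u N 0 ^ 2 * (1 - u ^ 2) <= 1.
Proof.
  intros Hu.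
  assert (H := mono0 (fun w => A w N 0 ^ 2 * (1 - w ^ 2))
                (fun w => 2 * A w N 0 * ((1 - w ^ 2) * dZ N w - w * A w N 0)) u).
  cbv beta in H. rewrite A0_one in H. replace (1 ^ 2 * (1 - 0 ^ 2)) with 1 in H by ring.
  apply H.
  - intros x. eapply D_ext'.
    apply (D_mult (fun w => A w N 0 ^ 2) (fun w => 1 - w ^ 2)).
    eapply D_ext'. apply (D_mult (fun w => A w N 0) (fun w => A w N 0)); apply Z_deriv.
    intros; simpl; ring. reflexivity.
    eapply D_ext'. apply (D_minus (fun _ => 1) (fun w => w * w)). apply D_const. apply D_mult; apply D_id.
    intros; simpl; ring. reflexivity.
    intros; reflexivity. simpl; ring.
  - intros x Hx. rewrite Rmin_left, Rmax_right in Hx by lra.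
    rewrite Z_id.
    assert (0 <= A x N 0) by (apply A_nonneg; lra).
    assert (0 <= P (pred N) 0 ^ 2 * c x (pred N)) by (apply Rmult_le_pos; [apply pow2_ge_0 | apply c_nonneg; lra]).
    assert (0 <= P N 0 ^ 2 * c x N) by (apply Rmult_le_pos; [apply pow2_ge_0 | apply c_nonneg; lra]).
    assert (0 <= INR N) by apply pos_INR.
    assert (0 <= INR (S N)) by apply pos_INR.
    assert (0 <= INR N * x * (P (pred N) 0 ^ 2 * c x (pred N)) + INR (S N) * x * (P N 0 ^ 2 * c x N)).
    { apply Rplus_le_le_0_compat; apply Rmult_le_pos; try lra; apply Rmult_le_pos; lra. }
    assert (0 <= 2 * A x N 0 * (INR N * x * (P (pred N) 0 ^ 2 * c x (pred N)) + INR (S N) * x * (P N 0 ^ 2 * c x N))) by (apply Rmult_le_pos; lra).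
    nra.
Qed.

Lemma exp_mono x y : x <= y -> exp x <= exp y.
Proof. intros H. destruct H as [H|H]. left; apply exp_increasing; auto. subst; lra. Qed.

Lemma hermite_P k l : hermite k l = P k l.
Proof.
  unfold hermite. rewrite rodrigues.
  assert (E1 : (-1) ^ k * (-1) ^ k = 1) by (rewrite <- Rpow_mult_distr; replace (-1 * -1) with 1 by ring; apply pow1).
  assert (E2 : exp (l ^ 2) * exp (- l ^ 2) = 1) by (rewrite <- exp_plus; rewrite Rplus_opp_r; apply exp_0).
  transitivity (((-1) ^ k * (-1) ^ k) * (exp (l ^ 2) * exp (- l ^ 2)) * P k l). ring.
  rewrite E1, E2. ring.
Qed.

Lemma amgm p X cc t : 0 < cc -> 0 < t -> Rabs p * X <= (t * (p ^ 2 * cc) + X ^ 2 / (cc * t)) / 2.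
Proof.
  intros Hc Ht. rewrite <- pow2_abs. set (q := Rabs p).
  assert (E : (t * (q ^ 2 * cc) + X ^ 2 / (cc * t)) / 2 - q * X = (t * cc * q - X) ^ 2 / (2 * t * cc)) by (field; lra).
  assert (0 <= (t * cc * q - X) ^ 2 / (2 * t * cc)).
  { apply Rmult_le_pos. apply pow2_ge_0. left; apply Rinv_0_lt_compat; nra. }
  lra.
Qed.

Lemma sum_lin (f g : nat -> R) t N : t <> 0 ->
  sum_f_R0 (fun k => (t * f k + g k / t) / 2) N = (t * sum_f_R0 f N + sum_f_R0 g N / t) / 2.
Proof.
  intros Ht. induction N as [|N IH]. simpl; reflexivity.
  rewrite !tech5, IH. field; auto.
Qed.

Lemma c_pos u k : 0 < u -> 0 < c u k.
Proof.
  intros Hu. unfold c. apply Rmult_lt_0_compat. apply pow_lt; lra.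
  apply Rinv_0_lt_compat, INR_fact_lt_0.
Qed.

Lemma sq_ratio x u k : 0 < u ->
  (x ^ k / INR (fact k)) ^ 2 / c u k = (2 * x ^ 2 / u) ^ k / INR (fact k).
Proof.
  intros Hu. unfold c.
  replace (2 * x ^ 2 / u) with (x ^ 2 * / (u / 2)) by (field; lra).
  rewrite Rpow_mult_distr, pow_inv.
  replace ((x ^ 2) ^ k) with ((x ^ k) ^ 2) by (rewrite <- !pow_mult; f_equal; lia).
  assert (0 < (u / 2) ^ k) by (apply pow_lt; lra).
  assert (INR (fact k) <> 0) by apply INR_fact_neq_0.
  field. lra.
Qed.

Theorem lemma8 :
  exists C : R, 0 < C /\
    forall l x : R, 0 <= x ->
      ex_series (fun k => Rabs (hermite k l) / INR (fact k) * x ^ k) /\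
      Series (fun k => Rabs (hermite k l) / INR (fact k) * x ^ k)
        <= C * sqrt (1 + x) * exp (x ^ 2 + l ^ 2 / 2).
Proof.
  exists (exp 1). split. apply exp_pos.
  intros l x Hx.
  assert (Hf : (fun k => Rabs (hermite k l) / INR (fact k) * x ^ k) =
               (fun k => Rabs (P k l) / INR (fact k) * x ^ k)).
  { apply functional_extensionality; intros k; rewrite hermite_P; reflexivity. }
  rewrite Hf.
  apply series_bound.
  { intros n. apply Rmult_le_pos. apply Rmult_le_pos. apply Rabs_pos.
    left; apply Rinv_0_lt_compat, INR_fact_lt_0. apply pow_le; lra. }
  intros N.
  assert (Hsq : 0 < sqrt (1 + x)) by (apply sqrt_lt_R0; lra).
  assert (HS2 : sqrt (1 + x) * sqrt (1 + x) = 1 + x) by (apply sqrt_sqrt; lra).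
  assert (He1 : exp 0 <= exp 1) by (apply exp_mono; lra). rewrite exp_0 in He1.
  assert (HE1 : 0 < exp (l ^ 2 / 2)) by apply exp_pos.
  assert (HEx : exp (x ^ 2 + l ^ 2 / 2) = exp (x ^ 2) * exp (l ^ 2 / 2)) by apply exp_plus.
  assert (HEx2 : 0 < exp (x ^ 2)) by apply exp_pos.
  destruct Hx as [Hx|Hx].
  2:{
    subst x.
    assert (H0 : sum_f_R0 (fun k => Rabs (P k l) / INR (fact k) * 0 ^ k) N = 1).
    { induction N as [|N IH]. simpl. rewrite Rabs_R1. field.
      rewrite tech5, IH. simpl. ring. }
    rewrite H0.
    assert (Hq : exp 0 <= exp (0 ^ 2 + l ^ 2 / 2)) by (apply exp_mono; nra). rewrite exp_0 in Hq.
    replace (1 + 0) with 1 by ring. rewrite sqrt_1. nra. }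
  set (u := x * (x + 2) / (1 + x) ^ 2).
  assert (Hu0 : 0 < u) by (unfold u; apply Rmult_lt_0_compat; [nra | apply Rinv_0_lt_compat; nra]).
  assert (Hu1 : u < 1).
  { unfold u. apply Rmult_lt_reg_r with ((1 + x) ^ 2). nra.
    unfold Rdiv. rewrite Rmult_assoc, Rinv_l by nra. nra. }
  assert (Hxu : x ^ 2 / u <= x ^ 2 + 1).
  { unfold u. replace (x ^ 2 / (x * (x + 2) / (1 + x) ^ 2)) with (x * (1 + x) ^ 2 / (x + 2)) by (field; split; nra).
    apply Rmult_le_reg_r with (x + 2). lra. unfold Rdiv. rewrite Rmult_assoc, Rinv_l by lra. nra. }
  assert (Hu2 : (1 - u ^ 2) * (1 + x) ^ 2 >= 1).
  { assert (E : 1 - u = 1 / (1 + x) ^ 2) by (unfold u; field; nra).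
    assert ((1 - u) * (1 + x) ^ 2 = 1) by (rewrite E; field; nra).
    nra. }
  assert (HA : A u N l <= exp (l ^ 2) * (1 + x)).
  { eapply Rle_trans. apply A_bound. lra.
    assert (HZ := Z_bound u (S N) (Rlt_le _ _ Hu0)).
    assert (HA0 : 0 <= A u (S N) 0) by (apply A_nonneg; lra).
    assert (HZ2 : A u (S N) 0 <= 1 + x).
    { assert (A u (S N) 0 ^ 2 <= (1 + x) ^ 2) by nra. nra. }
    destruct (aa_bounds u (conj (Rlt_le _ _ Hu0) Hu1)) as [Ha0 Ha1].
    assert (exp (aa u * l ^ 2) <= exp (l ^ 2)) by (apply exp_mono; nra).
    assert (0 < exp (aa u * l ^ 2)) by apply exp_pos.
    apply Rle_trans with (exp (l ^ 2) * A u (S N) 0). apply Rmult_le_compat_r; lra.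
    apply Rmult_le_compat_l. left; apply exp_pos. lra. }
  set (y := 2 * x ^ 2 / u).
  assert (Hy : 0 <= y) by (unfold y; apply Rmult_le_pos; [nra | left; apply Rinv_0_lt_compat; lra]).
  assert (HB : sum_f_R0 (fun k => y ^ k / INR (fact k)) N <= exp y) by (apply exp_ge_taylor; auto).
  set (E2 := exp (x ^ 2 / u)).
  assert (HE2 : 0 < E2) by apply exp_pos.
  assert (HEy : exp y = E2 * E2) by (unfold E2, y; rewrite <- exp_plus; f_equal; field; lra).
  assert (HEl : exp (l ^ 2) = exp (l ^ 2 / 2) * exp (l ^ 2 / 2)) by (rewrite <- exp_plus; f_equal; field).
  set (t := E2 / (exp (l ^ 2 / 2) * sqrt (1 + x))).
  assert (Ht : 0 < t) by (unfold t; apply Rmult_lt_0_compat; [lra | apply Rinv_0_lt_compat; nra]).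
  apply Rle_trans with (sum_f_R0 (fun k => (t * (P k l ^ 2 * c u k) + (y ^ k / INR (fact k)) / t) / 2) N).
  { apply sum_Rle. intros k _.
    unfold y. rewrite <- (sq_ratio x u k Hu0).
    assert (Hck : c u k <> 0) by (apply Rgt_not_eq, c_pos; lra).
    assert (Htn : t <> 0) by lra. assert (Hfk := INR_fact_neq_0 k).
    replace ((x ^ k / INR (fact k)) ^ 2 / c u k / t) with ((x ^ k / INR (fact k)) ^ 2 / (c u k * t))
      by (field; repeat split; auto).
    replace (Rabs (P k l) / INR (fact k) * x ^ k) with (Rabs (P k l) * (x ^ k / INR (fact k))) by (field; apply INR_fact_neq_0).
    apply amgm. apply c_pos; lra. exact Ht. }
  rewrite sum_lin by lra. fold (A u N l).
  apply Rle_trans with ((t * (exp (l ^ 2) * (1 + x)) + exp y / t) / 2).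
  { assert (t * A u N l <= t * (exp (l ^ 2) * (1 + x))) by (apply Rmult_le_compat_l; lra).
    assert (sum_f_R0 (fun k => y ^ k / INR (fact k)) N / t <= exp y / t).
    { unfold Rdiv. apply Rmult_le_compat_r. left; apply Rinv_0_lt_compat; lra. lra. }
    lra. }
  replace ((t * (exp (l ^ 2) * (1 + x)) + exp y / t) / 2) with (E2 * exp (l ^ 2 / 2) * sqrt (1 + x)).
  2:{ rewrite HEy, HEl. unfold t. set (S := sqrt (1 + x)) in *. rewrite <- HS2. field. split; lra. }
  rewrite HEx.
  assert (E2 <= exp 1 * exp (x ^ 2)) by (unfold E2; rewrite <- exp_plus; apply exp_mono; lra).
  assert (0 < exp (l ^ 2 / 2) * sqrt (1 + x)) by nra.
  nra.
Qed.
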